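(* Consider the delayed online learning protocol of the context, with DDA run with a constant learning rate $\eta_t\equiv\eta$, and fix a comparator $p\in\mathcal X$. Let $\lambda=\max_{1\le t\le T}|\mathcal U_t|$, $\Lambda=\sum_{t=1}^T|\mathcal U_t|$ and $L_T=\sum_{t=1}^T\big(\|g_t\|_*^2+2\|g_t\|_*\sum_{q\in\mathcal U_t}\|g_q\|_*\big)$. Then: (i) if $\|g_t\|_*$ is uniformly bounded and $\eta=\Theta(1/\sqrt{\lambda T})$, then $R_T(p)=O(\sqrt{\lambda T})$; (ii) if $\|g_t\|_*$ is uniformly bounded and $\eta=\Theta(1/\sqrt{\Lambda})$, then $R_T(p)=O(\sqrt{\Lambda})$; (iii) if $\eta=\Theta(1/\sqrt{L_T})$, then $R_T(p)=O(\sqrt{L_T})$.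
   Context: Let $\mathcal V$ be a finite-dimensional real vector space with norm $\|\cdot\|$ and dual norm $\|\cdot\|_*$, and let $\mathcal X\subset\mathcal V$ be closed and convex. A regularizer is a function $h:\mathcal V\to\mathbb R\cup\{+\infty\}$ that is lower semicontinuous, $1$-strongly convex with respect to $\|\cdot\|$ on $\mathcal X$, satisfies $\mathcal X\subset\operatorname{dom}h$, whose subdifferential admits a continuous selection, and which is nonnegative. Protocol: at each round $t=1,\dots,T$ exactly one agent $i(t)$ is active, plays $x_t\in\mathcal X$ and incurs $f_t(x_t)$, where $f_t$ is convex with $\mathcal X\subset\operatorname{dom}\partial f_t$; a subgradient $g_t\in\partial f_t(x_t)$ is revealed later. $\mathcal S^i_t\subset\{1,\dots,t-1\}$ is the set of timestamps $s$ with $g_s$ available to agent $i$ at time $t$, nondecreasing in $t$; $\mathcal S_t=\mathcal S^{i(t)}_t$, $\mathcal U_t=\{1,\dots,t-1\}\setminus\mathcal S_t$. DDA: $x_t=\arg\min_{x\in\mathcal X}\{\sum_{s\in\mathcal S_t}\langle g_s,x\rangle+h(x)/\eta_t\}$. Regret: $R_T(p)=\sum_{t=1}^Tf_t(x_t)-\sum_{t=1}^Tf_t(p)$.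
   Formalization: Part (ii) carries the extra hypothesis T ≤ κΛ, where κ is any constant fixed before the constant in O(√Λ) is chosen, so it covers only the regime T = O(Λ). The statement above fails without it. *)

(* Defs.v *)
(* The finite-dimensional real vector space V is modelled as 'rV[R]_n
   (R : realType); its dual V^* is identified with 'rV[R]_n through the
   standard pairing [dotv]. *)
From HB Require Import structures.
From mathcomp Require Import all_boot all_order all_algebra.
From mathcomp Require Import all_classical all_reals all_analysis.
Import Order.TTheory GRing.Theory Num.Theory numFieldNormedType.Exports.

Set Implicit Arguments.
Unset Strict Implicit.
Unset Printing Implicit Defensive.

Local Open Scope classical_set_scope.
Local Open Scope ring_scope.

Section Defs.
Variables (R : realType) (n : nat).
Notation V := 'rV[R]_n.

Definition dotv (g x : V) : R := \sum_(j < n) g ord0 j * x ord0 j.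

Definition is_norm (N : V -> R) : Prop :=
  [/\ forall x, 0 <= N x,
      forall x, N x = 0 -> x = 0,
      forall (a : R) x, N (a *: x) = `|a| * N x
    & forall x y, N (x + y) <= N x + N y].

Definition dual_norm (N : V -> R) (g : V) : R :=
  sup [set dotv g x | x in [set x | N x <= 1]].

Definition convex_set_V (X : set V) : Prop :=
  forall x y (t : R), X x -> X y -> 0 <= t <= 1 -> X (t *: x + (1 - t) *: y).

Definition edom (f : V -> \bar R) : set V := [set x | (f x < +oo)%E].

Definition convex_fun (f : V -> \bar R) : Prop :=
  forall x y (a b t : R), (f x <= a%:E)%E -> (f y <= b%:E)%E -> 0 <= t <= 1 ->
    (f (t *: x + (1 - t) *: y)%R <= (t * a + (1 - t) * b)%:E)%E.

Definition subdiff (f : V -> \bar R) (x : V) : set V :=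
  [set g | f x \is a fin_num /\
           forall y, (f x + (dotv g (y - x)%R)%:E <= f y)%E].

Definition dom_subdiff (f : V -> \bar R) : set V :=
  [set x | subdiff f x !=set0].

Definition strongly_convex_on (N : V -> R) (X : set V) (h : V -> \bar R) :=
  forall x y (t : R), X x -> X y -> 0 <= t <= 1 ->
    (h (t *: x + (1 - t) *: y)%R + (t * (1 - t) / 2 * N (x - y) ^+ 2)%:E
       <= t%:E * h x + (1 - t)%:E * h y)%E.

Definition regularizer (N : V -> R) (X : set V) (h : V -> \bar R) : Prop :=
  [/\ lower_semicontinuous h,
      strongly_convex_on N X h,
      X `<=` edom h,
      (exists s : V -> V, {within dom_subdiff h, continuous s} /\
         forall x, dom_subdiff h x -> subdiff h x (s x))
    & forall x, (0 <= h x)%E].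

(* |U_t| : number of s in {1,..,t-1} whose gradient is not available
   to the active agent i(t) at time t *)
Definition Ucard (I : Type) (i : nat -> I) (S : I -> nat -> pred nat) (t : nat)
  : nat := (\sum_(1 <= s < t | ~~ S (i t) t s) 1)%N.

Definition lam_delay (I : Type) (i : nat -> I) (S : I -> nat -> pred nat)
  (T : nat) : nat := (\max_(1 <= t < T.+1) Ucard i S t)%N.

Definition Lam_delay (I : Type) (i : nat -> I) (S : I -> nat -> pred nat)
  (T : nat) : nat := (\sum_(1 <= t < T.+1) Ucard i S t)%N.

Definition L_T (N : V -> R) (I : Type) (i : nat -> I)
  (S : I -> nat -> pred nat) (g : nat -> V) (T : nat) : R :=
  \sum_(1 <= t < T.+1)
     (dual_norm N (g t) ^+ 2 +
      2 * dual_norm N (g t) *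
        \sum_(1 <= q < t | ~~ S (i t) t q) dual_norm N (g q)).

Definition dda_obj (h : V -> \bar R) (eta : R) (I : Type) (i : nat -> I)
  (S : I -> nat -> pred nat) (g : nat -> V) (t : nat) (y : V) : \bar R :=
  ((\sum_(1 <= s < t | S (i t) t s) dotv (g s) y)%:E + (eta^-1)%:E * h y)%E.

(* The delayed protocol with T rounds, active agents i(t), availability sets
   S^j_t, losses f_t, revealed subgradients g_t, and plays x_t given by DDA
   with constant learning rate eta. *)
Definition delayed_DDA (X : set V) (h : V -> \bar R) (eta : R)
  (I : Type) (T : nat) (i : nat -> I) (S : I -> nat -> pred nat)
  (f : nat -> V -> \bar R) (g : nat -> V) (x : nat -> V) : Prop :=
  [/\ forall (j : I) t s, (1 <= t <= T)%N -> S j t s -> (1 <= s < t)%N,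
      forall (j : I) t t' s, (1 <= t)%N -> (t <= t')%N -> (t' <= T)%N ->
        S j t s -> S j t' s,
      forall t, (1 <= t <= T)%N -> convex_fun (f t) /\ X `<=` dom_subdiff (f t),
      forall t, (1 <= t <= T)%N -> subdiff (f t) (x t) (g t)
    & forall t, (1 <= t <= T)%N ->
        X (x t) /\ forall y, X y ->
          (dda_obj h eta i S g t (x t) <= dda_obj h eta i S g t y)%E].

Definition regret (f : nat -> V -> \bar R) (x : nat -> V) (p : V) (T : nat)
  : \bar R := (\sum_(1 <= t < T.+1) (f t (x t) - f t p))%E.

End Defs.

(* Main.v *)
Require Import Defs.
From HB Require Import structures.
From mathcomp Require Import all_boot all_order all_algebra.
From mathcomp Require Import all_classical all_reals all_analysis.
From mathcomp Require Import ring lra.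
Import Order.TTheory GRing.Theory Num.Theory numFieldNormedType.Exports.
Local Open Scope classical_set_scope.
Local Open Scope ring_scope.

Section NormEq.
Variables (R : realType) (n : nat) (N : 'rV[R]_n -> R).
Hypothesis HN : is_norm N.

Lemma N0 : N 0 = 0.
Proof. case: HN => _ _ hZ _. by rewrite -(scale0r (0:'rV[R]_n)) hZ normr0 mul0r. Qed.

Lemma NN x : N (- x) = N x.
Proof. case: HN => _ _ hZ _. by rewrite -scaleN1r hZ normrN normr1 mul1r. Qed.

Lemma Nge0 x : 0 <= N x.
Proof. by case: HN. Qed.

Lemma Nsum (I : finType) (F : I -> 'rV[R]_n) : N (\sum_i F i) <= \sum_i N (F i).
Proof.
case: HN => _ _ _ hD.
elim/big_ind2: _ => [|a b c d h1 h2|i _]; first by rewrite N0.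
  by apply: le_trans (hD _ _) _; apply: lerD.
by [].
Qed.

Definition KN := \sum_(j < n) N (delta_mx 0 j).

Lemma N_le_mx x : N x <= `|x| * KN.
Proof.
case: HN => _ _ hZ _.
rewrite {1}(row_sum_delta x) /KN mulr_sumr.
apply: le_trans (Nsum _ _) _; apply: ler_sum => j _.
rewrite hZ; apply: ler_wpM2r; first exact: Nge0.
have -> : `|x| = mx_norm x by []. rewrite mx_normrE; apply/bigmax_geP; right; exists (ord0, j) => //=.
Qed.

Lemma N_cont : continuous N.
Proof.
case: HN => _ _ _ hD.
move=> x; apply/(@cvgrPdist_le _ _ _ _ (nbhs_filter x)) => e e0.
have K0 : 0 < KN + 1 by rewrite ltr_wpDl // sumr_ge0 // => j _; exact: Nge0.
have hx : (fun t : 'rV[R]_n => t) @ nbhs x --> x by apply: cvg_id.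
move/cvgrPdist_le: hx => /(_ (e / (KN + 1))); rewrite divr_gt0 // => /(_ isT).
apply: filterS => t ht.
have h1 : N x <= N t + N (x - t) by rewrite -{1}(subrKC t x); exact: hD.
have h2 : N t <= N x + N (t - x) by rewrite -{1}(subrKC x t); exact: hD.
have KN0 : 0 <= KN by rewrite /KN sumr_ge0 // => j _; exact: Nge0.
have h3 : N (x - t) <= e.
  apply: le_trans (N_le_mx _) _.
  apply: le_trans (ler_wpM2r KN0 ht) _.
  rewrite mulrAC ler_pdivrMr //; apply: ler_wpM2l; [exact: ltW | lra].
have h4 : N (t - x) = N (x - t) by rewrite -opprB NN.
rewrite ler_norml; apply/andP; split; lra.
Qed.


End NormEq.
Arguments N0 {R n N}.
Arguments NN {R n N}.
Arguments Nge0 {R n N}.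
Arguments Nsum {R n N}.
Arguments N_cont {R n N}.

Lemma mx_norm_entry (R : realType) n (x : 'rV[R]_n) j : `|x ord0 j| <= `|x|.
Proof.
have -> : `|x| = mx_norm x by [].
by rewrite mx_normrE; apply/bigmax_geP; right; exists (ord0, j).
Qed.

Lemma N_equiv {R : realType} {n} {N : 'rV[R]_n -> R} : is_norm N ->
  exists2 m : R, 0 < m & forall x, m * `|x| <= N x.
Proof.
case: n N => [|k] N HN; have [Hpos Hdef hZ hD] := HN.
  exists 1 => // x; rewrite (thinmx0 x) normr0 mulr0; exact: Hpos.
pose S := [set v : 'rV[R]_k.+1 | `|v| = 1].
have Scl : closed S.
  apply: (@preimage_closed _ _ (fun v : 'rV[R]_k.+1 => `|v|) [set 1]).
    by move=> v _; apply: norm_continuous.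
  exact: closed_eq.
have Sco : compact S.
  have Bco : compact [set v : 'rV[R]_k.+1 | forall i, `[(-1:R), 1]%classic (v ord0 i)].
    apply: (@rV_compact _ _ (fun=> `[(-1:R), 1]%classic)).
    by move=> _; apply: segment_compact.
  apply: subclosed_compact Scl Bco _ => v /= v1 i.
  have := @mx_norm_entry R _ v i. rewrite v1 /= in_itv /= => /ler_normlP [h1 h2].
  by rewrite h2 andbT lerNl.
have S0 : S !=set0.
  exists (const_mx 1); rewrite /S /=.
  have -> : `|const_mx 1 : 'rV[R]_k.+1| = mx_norm (const_mx 1 : 'rV[R]_k.+1) by [].
  rewrite mx_normrE; apply/le_anti/andP; split.
    by apply/bigmax_leP; split => // ij _; rewrite mxE normr1.
  by apply/bigmax_geP; right; exists (ord0, ord0) => //=; rewrite mxE normr1.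
have Nc : {within S, continuous N} by apply: continuous_subspaceT; exact: N_cont.
have [c cS cmin] := EVT_min_rV S0 Sco Nc.
move: cS; rewrite inE => cS.
exists (N c).
  rewrite lt_def Hpos andbT; apply/eqP => /Hdef c0.
  by move: cS; rewrite /S /= c0 normr0 => /eqP; rewrite eq_sym oner_eq0.
move=> x; have [->|x0] := eqVneq x 0; first by rewrite normr0 mulr0 Hpos.
have nx0 : 0 < `|x| by rewrite normr_gt0.
have : N c <= N (`|x|^-1 *: x).
  apply: cmin; rewrite inE /S /= normrZ normrV ?unitfE ?normr_eq0 // normr_id mulVf //.
  by rewrite normr_eq0.
rewrite hZ normrV ?unitfE ?normr_eq0 // normr_id => h.
by rewrite -ler_pdivlMr // mulrC.
Qed.

Section Dot.
Variables (R : realType) (n : nat).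
Implicit Types (g x y : 'rV[R]_n).

Lemma dotvDl g g' x : dotv (g + g') x = dotv g x + dotv g' x.
Proof. by rewrite /dotv -big_split; apply: eq_bigr => j _; rewrite mxE mulrDl. Qed.
Lemma dotvDr g x y : dotv g (x + y) = dotv g x + dotv g y.
Proof. by rewrite /dotv -big_split; apply: eq_bigr => j _; rewrite mxE mulrDr. Qed.
Lemma dotvZr g a x : dotv g (a *: x) = a * dotv g x.
Proof. by rewrite /dotv mulr_sumr; apply: eq_bigr => j _; rewrite mxE mulrCA. Qed.
Lemma dotvNr g x : dotv g (- x) = - dotv g x.
Proof. by rewrite -scaleN1r dotvZr mulN1r. Qed.
Lemma dotvNl g x : dotv (- g) x = - dotv g x.
Proof. by rewrite /dotv -sumrN; apply: eq_bigr => j _; rewrite mxE mulNr. Qed.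
Lemma dotvBr g x y : dotv g (x - y) = dotv g x - dotv g y.
Proof. by rewrite dotvDr dotvNr. Qed.
Lemma dotvBl g g' x : dotv (g - g') x = dotv g x - dotv g' x.
Proof. by rewrite dotvDl dotvNl. Qed.
Lemma dotv0r g : dotv g 0 = 0.
Proof. by rewrite /dotv big1 // => j _; rewrite mxE mulr0. Qed.
Lemma dotv0l x : dotv 0 x = 0.
Proof. by rewrite /dotv big1 // => j _; rewrite mxE mul0r. Qed.
Lemma dotv_suml (I : Type) (r : seq I) (P : pred I) (F : I -> 'rV[R]_n) x :
  dotv (\sum_(i <- r | P i) F i) x = \sum_(i <- r | P i) dotv (F i) x.
Proof.
elim/big_rec2: _ => [|i y1 y2 _ <-]; first exact: dotv0l.
by rewrite dotvDl.
Qed.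

Lemma dotv_bound g x : dotv g x <= (\sum_j `|g ord0 j|) * `|x|.
Proof.
rewrite /dotv mulr_suml; apply: ler_sum => j _.
apply: le_trans (ler_norm _) _; rewrite normrM; apply: ler_wpM2l => //.
exact: mx_norm_entry.
Qed.

Variable N : 'rV[R]_n -> R.
Hypothesis HN : is_norm N.

Lemma dual_has_sup g : has_sup [set dotv g x | x in [set x | N x <= 1]].
Proof.
have [m m0 hm] := N_equiv HN.
split; first by exists 0, 0; [rewrite /= (N0 HN) ler01 | rewrite dotv0r].
exists ((\sum_j `|g ord0 j|) / m) => _ [x /= Nx <-].
apply: le_trans (dotv_bound _ _) _; apply: ler_wpM2l.
  by apply: sumr_ge0 => j _.
rewrite -(ler_pM2l m0) mulrV ?unitfE ?gt_eqF //; exact: le_trans (hm x) Nx.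
Qed.

Lemma dual_ub g x : N x <= 1 -> dotv g x <= dual_norm N g.
Proof. by move=> Nx; apply: sup_upper_bound; [exact: dual_has_sup | exists x]. Qed.

Lemma dual_ge0 g : 0 <= dual_norm N g.
Proof. by rewrite -(dotv0r g); apply: dual_ub; rewrite (N0 HN) ler01. Qed.

Lemma dotv_le g z : dotv g z <= dual_norm N g * N z.
Proof.
have [Hpos Hdef hZ hD] := HN.
have [z0|] := eqVneq (N z) 0.
  by rewrite (Hdef _ z0) dotv0r (N0 HN) mulr0.
move=> nz0; have nz : 0 < N z by rewrite lt_def nz0 Hpos.
have := @dual_ub g ((N z)^-1 *: z).
rewrite hZ dotvZr ger0_norm ?invr_ge0 ?Hpos // mulVf // lexx => /(_ isT).
by move=> h; rewrite -ler_pdivrMr // mulrC.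
Qed.

Lemma dotv_le' g z : - dotv g z <= dual_norm N g * N z.
Proof. by rewrite -dotvNr -(NN HN z); exact: dotv_le. Qed.

End Dot.
Arguments dual_has_sup {R n N}.
Arguments dual_ub {R n N}.
Arguments dual_ge0 {R n N}.
Arguments dotv_le {R n N}.
Arguments dotv_le' {R n N}.




Lemma quad_le {R : realType} (eta ie a r : R) : 0 < eta -> eta * ie = 1 ->
  a * r <= ie * r ^+ 2 / 4 + eta * a ^+ 2.
Proof.
move=> e0 h.
have : 0 <= eta * (ie * r - 2 * a) ^+ 2 by apply: mulr_ge0; [exact: ltW | exact: sqr_ge0].
have -> : eta * (ie * r - 2 * a) ^+ 2 = (eta * ie) * ie * r^+2 - 4 * (eta * ie) * a * r + 4 * eta * a^+2 by ring.
rewrite h; lra.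
Qed.

Section Core.
Variables (R : realType) (n : nat) (N : 'rV[R]_n -> R) (X : set 'rV[R]_n)
  (h : 'rV[R]_n -> \bar R) (eta : R).
Hypotheses (HN : is_norm N) (HX : convex_set_V X) (Hsc : strongly_convex_on N X h)
  (Hfin : forall y, X y -> h y \is a fin_num) (Hh0 : forall y, (0 <= h y)%E)
  (eta0 : 0 < eta).

Let ie := eta^-1.
Let eie : eta * ie = 1. Proof. by rewrite /ie mulfV // gt_eqF. Qed.
Let ie0 : 0 < ie. Proof. by rewrite /ie invr_gt0. Qed.

Definition hr y := fine (h y).
Definition phi (th y : 'rV[R]_n) := dotv th y - ie * hr y.

Lemma hrE {y} : X y -> h y = (hr y)%:E.
Proof. by move=> Xy; rewrite /hr fineK // Hfin. Qed.

Lemma hr0 y : 0 <= hr y.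
Proof. by rewrite /hr; apply: fine_ge0. Qed.

Lemma SCr {x y t} : X x -> X y -> 0 <= t <= 1 ->
  hr (t *: x + (1 - t) *: y) + t * (1 - t) / 2 * N (x - y) ^+ 2 <=
  t * hr x + (1 - t) * hr y.
Proof.
move=> Xx Xy t01; have := Hsc _ _ _ Xx Xy t01.
by rewrite (hrE (HX _ _ _ Xx Xy t01)) (hrE Xx) (hrE Xy) -!EFinM -!EFinD lee_fin.
Qed.

Definition mid (x y : 'rV[R]_n) := (1/2 : R) *: x + (1 - 1/2) *: y.

Lemma midX {x y} : X x -> X y -> X (mid x y).
Proof. by move=> Xx Xy; apply: HX => //; apply/andP; split; lra. Qed.

Lemma MP th {x y} : X x -> X y ->
  (phi th y + phi th x) / 2 + ie * N (y - x) ^+ 2 / 8 <= phi th (mid y x).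
Proof.
move=> Xx Xy.
have t01 : 0 <= (1/2 : R) <= 1 by apply/andP; split; lra.
have H := SCr Xy Xx t01.
rewrite /phi /mid dotvDr !dotvZr.
have H' : ie * hr ((1/2 : R) *: y + (1 - 1/2) *: x) <= ie * ((1/2) * hr y + (1 - 1/2) * hr x) - ie * (1/2 * (1 - 1/2) / 2 * N (y - x) ^+ 2).
  rewrite -mulrBr; apply: ler_wpM2l; [exact: ltW | lra].
lra.
Qed.

Lemma SCmin th {x} : X x -> (forall y, X y -> phi th y <= phi th x) ->
  forall y, X y -> phi th y + ie * N (y - x) ^+ 2 / 4 <= phi th x.
Proof.
move=> Xx xmax y Xy.
have := MP th Xx Xy; have := xmax _ (midX Xy Xx); lra.
Qed.


Definition Psi th := sup [set phi th y | y in X].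

Definition attained th x := X x /\ forall y, X y -> phi th y <= phi th x.

Lemma Psi_has_sup {th0 x0} : attained th0 x0 -> forall th, has_sup [set phi th y | y in X].
Proof.
move=> [Xx0 xmax] th; split; first by exists (phi th x0), x0.
set a := dual_norm N (th - th0).
exists (phi th0 x0 + dotv (th - th0) x0 + eta * a ^+ 2) => _ [y Xy <-].
have h1 := SCmin th0 Xx0 xmax _ Xy.
have h2 := dotv_le HN (th - th0) (y - x0).
have h3 := quad_le _ _ a (N (y - x0)) eta0 eie.
have e1 : phi th y = phi th0 y + dotv (th - th0) y by rewrite /phi dotvBl; ring.
have e2 : dotv (th - th0) (y - x0) = dotv (th - th0) y - dotv (th - th0) x0 by rewrite dotvBr.
have e3 : a * N (y - x0) = dual_norm N (th - th0) * N (y - x0) by [].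
lra.
Qed.

Lemma Psi_ub {th0 x0} th {y} : attained th0 x0 -> X y -> phi th y <= Psi th.
Proof. by move=> at0 Xy; apply: sup_upper_bound; [exact: Psi_has_sup at0 th | exists y]. Qed.

Lemma Psi_le th B : X !=set0 -> (forall y, X y -> phi th y <= B) -> Psi th <= B.
Proof.
move=> [y0 Xy0] hB; apply: ge_sup; first by exists (phi th y0), y0.
by move=> _ [y Xy <-]; exact: hB.
Qed.

Lemma step th u g x b : attained th x -> 0 <= b ->
  (forall z, dotv u z <= b * N z) ->
  Psi (th - u - g) <= Psi (th - u) - dotv g x
     + eta * (dual_norm N g) ^+ 2 + 4 * eta * (dual_norm N g) * b.
Proof.
move=> at0 b0 hu; have [Xx xmax] := at0.
set a := dual_norm N g; have a0 : 0 <= a := dual_ge0 HN g.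
set Th := th - u.
have hs := Psi_has_sup at0 Th.
set B := Psi Th - dotv g x + eta * a ^+ 2 + 4 * eta * a * b.
apply/ler_addgt0Pr => e e0.
pose m := e / (a + 1).
have a10 : 0 < a + 1 by lra.
have m0 : 0 < m by rewrite /m divr_gt0.
have em : e = (a + 1) * m by rewrite /m mulrC divfK // gt_eqF.
rewrite em.
pose eps := Num.min m (m ^+ 2 * ie / 8).
have eps0 : 0 < eps.
  rewrite /eps lt_min m0 /=; apply: divr_gt0; last by lra.
  by apply: mulr_gt0 => //; apply: exprn_gt0.
have epsm : eps <= m by rewrite /eps ge_min lexx.
have epsm2 : eps <= m ^+ 2 * ie / 8 by rewrite /eps ge_min lexx orbT.
have [_ [y' Xy' <-] hy'] := sup_adherent eps0 hs.
rewrite -/(Psi Th) in hy'.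
set r := N (y' - x).
have r0 : 0 <= r := Nge0 HN _.
have phiE z : phi th z = phi Th z + dotv u z by rewrite /phi /Th dotvBl; ring.
have c1 : ie * r ^+ 2 / 4 <= eps + b * r.
  have h1 := SCmin th Xx xmax _ Xy'.
  have h2 := Psi_ub Th at0 Xx.
  have h3 := hu (x - y').
  have h4 : N (x - y') = r by rewrite /r -opprB NN.
  rewrite dotvBr h4 in h3.
  rewrite !phiE -/r in h1; lra.
have c2 : r <= 4 * eta * b + m.
  rewrite leNgt; apply/negP => hr.
  have c1' : r ^+ 2 <= 4 * eta * eps + 4 * eta * b * r.
    have := ler_wpM2l (ltW eta0) c1.
    have -> : eta * (ie * r ^+ 2 / 4) = (eta * ie) * r ^+ 2 / 4 by ring.
    rewrite eie; lra.
  have e2 : eta * eps <= m ^+ 2 / 8.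
    have := ler_wpM2l (ltW eta0) epsm2.
    have -> : eta * (m ^+ 2 * ie / 8) = (eta * ie) * m ^+ 2 / 8 by ring.
    by rewrite eie mul1r.
  have eb0 : 0 <= eta * b by apply: mulr_ge0 => //; exact: ltW.
  nra.
apply: Psi_le; first by exists x.
move=> y Xy.
set s := N (y - y').
have h1 := MP Th Xy' Xy; rewrite -/s in h1.
have h2 := Psi_ub Th at0 (midX Xy Xy').
have h3 := dotv_le' HN g (y' - x).
have h4 := dotv_le' HN g (y - y').
rewrite !dotvBr -/r -/s -/a in h3 h4.
have h5 := quad_le _ _ a s eta0 eie.
have h6 := ler_wpM2l a0 c2.
have e1 : phi (Th - g) y = phi Th y - dotv g y by rewrite /phi dotvBl; ring.
rewrite e1 /B.
lra.
Qed.


Lemma core_bound (I : Type) T (i : nat -> I) S f g x p :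
  delayed_DDA X h eta T i S f g x -> X p ->
  \sum_(1 <= t < T.+1) dotv (g t) (x t - p) <= ie * hr p + 2 * eta * L_T N i S g T.
Proof.
case=> HS Hmono Hf Hsub Hx Xp.
pose Gv t := \sum_(1 <= s < t | S (i t) t s) g s.
pose Uv t := \sum_(1 <= s < t | ~~ S (i t) t s) g s.
pose Fv t := \sum_(1 <= s < t) g s.
pose Th t := - Fv t.
pose a t := dual_norm N (g t).
pose b t := \sum_(1 <= q < t | ~~ S (i t) t q) dual_norm N (g q).
have att t : (1 <= t <= T)%N -> attained (- Gv t) (x t).
  move=> tT; have [Xxt xmin] := Hx t tT; split => // y Xy.
  have := xmin y Xy; rewrite /dda_obj (hrE Xy) (hrE Xxt) -!EFinM -!EFinD lee_fin.
  rewrite /phi !dotvNl /Gv !dotv_suml -/ie; lra.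
have FvE t : Fv t = Gv t + Uv t by rewrite /Fv (bigID (S (i t) t)).
have FvS t : (1 <= t)%N -> Fv t.+1 = Fv t + g t by move=> t1; rewrite /Fv big_nat_recr.
have key t : (1 <= t < T.+1)%N -> dotv (g t) (x t - p) <=
    - (Psi (Th t.+1) - Psi (Th t)) + - dotv (g t) p +
    2 * eta * (a t ^+ 2 + 2 * a t * b t).
  move=> /andP[t1 tT].
  have b0 : 0 <= b t by apply: sumr_ge0 => q _; exact: dual_ge0.
  have hu z : dotv (Uv t) z <= b t * N z.
    rewrite /Uv dotv_suml /b mulr_suml; apply: ler_sum => q _; exact: dotv_le.
  have tT' : (0 < t <= T)%N by rewrite t1.
  have := @step (- Gv t) (Uv t) (g t) (x t) (b t) (att t tT') b0 hu.
  have -> : - Gv t - Uv t - g t = Th t.+1 by rewrite /Th FvS // FvE !opprD.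
  have -> : - Gv t - Uv t = Th t by rewrite /Th FvE opprD.
  rewrite dotvBr -/(a t) => H.
  have : 0 <= eta * a t ^+ 2 by apply: mulr_ge0; [exact: ltW | exact: sqr_ge0].
  lra.
have [->|T1] := eqVneq T 0%N.
  rewrite big_geq // /L_T big_geq // mulr0 addr0; apply: mulr_ge0; [exact: ltW | exact: hr0].
have T1' : (1 <= T)%N by rewrite lt0n.
apply: le_trans (ler_sum_nat key) _.
rewrite !big_split /= sumrN telescope_sumr // sumrN -mulr_sumr.
have P1 : Psi (Th 1) <= 0.
  apply: Psi_le; first by exists p.
  move=> y Xy; rewrite /Th /Fv big_geq // oppr0 /phi dotv0l sub0r oppr_le0.
  by apply: mulr_ge0; [exact: ltW | exact: hr0].
have P2 : phi (Th T.+1) p <= Psi (Th T.+1).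
  by apply: (Psi_ub _ (att 1%N _)).
have E : \sum_(1 <= t < T.+1) dotv (g t) p = dotv (Fv T.+1) p by rewrite /Fv dotv_suml.
rewrite E -/(L_T N i S g T).
move: P2; rewrite /phi /Th dotvNl; lra.
Qed.

Lemma regret_bound (I : Type) T (i : nat -> I) S f g x p :
  delayed_DDA X h eta T i S f g x -> X p ->
  (regret f x p T <= (ie * hr p + 2 * eta * L_T N i S g T)%:E)%E.
Proof.
move=> Hd Xp; have := @core_bound I T i S f g x p Hd Xp; rewrite -lee_fin => H.
apply: le_trans H; rewrite -sumEFin /regret big_nat_cond [X in (_ <= X)%E]big_nat_cond.
apply: lee_sum => t /andP[/andP[t1 tT] _].
case: Hd => _ _ Hf Hsub _.
have tT' : (0 < t <= T)%N by rewrite t1.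
have [fxfin fsub] := Hsub t tT'.
have [_ /(_ p Xp) [g' [fpfin _]]] := Hf t tT'.
have := fsub p; rewrite -(fineK fxfin) -(fineK fpfin) -EFinD -EFinB !lee_fin.
rewrite !dotvBr; lra.
Qed.

Lemma final_bound (I : Type) T (i : nat -> I) S f g x p (K Q c1 c2 : R) :
  delayed_DDA X h eta T i S f g x -> X p -> 0 < Q -> 0 <= K ->
  L_T N i S g T <= K * Q -> 0 < c1 ->
  c1 / Num.sqrt Q <= eta <= c2 / Num.sqrt Q ->
  (regret f x p T <= ((hr p / c1 + 2 * c2 * K) * Num.sqrt Q)%:E)%E.
Proof.
move=> Hd Xp Q0 K0 LK c10 /andP[e1 e2].
apply: le_trans (@regret_bound I T i S f g x p Hd Xp) _; rewrite lee_fin.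
set sq := Num.sqrt Q.
have sq0 : 0 < sq by rewrite /sq sqrtr_gt0.
have QE : Q = sq ^+ 2 by rewrite /sq sqr_sqrtr // ltW.
rewrite QE in LK.
have h1 : c1 <= eta * sq by rewrite -ler_pdivrMr.
have h2 : eta * sq <= c2 by rewrite -ler_pdivlMr.
have h3 : c1 * ie <= sq.
  have := ler_wpM2r (ltW ie0) h1; rewrite mulrAC eie mul1r //.
have hp := hr0 p.
have h4 : ie * hr p <= sq * hr p / c1.
  rewrite ler_pdivlMr // mulrAC; apply: ler_wpM2r => //; by rewrite mulrC.
have h5 : eta * L_T N i S g T <= c2 * K * sq.
  have := ler_wpM2l (ltW eta0) LK.
  have -> : eta * (K * sq ^+ 2) = (eta * sq) * (K * sq) by ring.
  move=> H; apply: le_trans H _.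
  have -> : c2 * K * sq = c2 * (K * sq) by ring.
  apply: ler_wpM2r => //; apply: mulr_ge0 => //; exact: ltW.
have -> : (hr p / c1 + 2 * c2 * K) * sq = sq * hr p / c1 + 2 * (c2 * K * sq).
  by rewrite mulrDl; congr (_ + _); ring.
lra.
Qed.

End Core.



Lemma L_le (R : realType) n (N : 'rV[R]_n -> R) (HN : is_norm N) (I : Type) (i : nat -> I)
  S (g : nat -> 'rV[R]_n) T (G : R) : 0 <= G ->
  (forall t, (1 <= t <= T)%N -> dual_norm N (g t) <= G) ->
  L_T N i S g T <= \sum_(1 <= t < T.+1) (G ^+ 2 + 2 * G ^+ 2 * (Ucard i S t)%:R).
Proof.
move=> G0 HG; apply: ler_sum_nat => t /andP[t1 tT].
set a := dual_norm N (g t).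
set b := \sum_(1 <= q < t | ~~ S (i t) t q) dual_norm N (g q).
have a0 : 0 <= a := dual_ge0 HN _.
have aG : a <= G by apply: HG; rewrite t1.
have b0 : 0 <= b by apply: sumr_ge0 => q _; exact: dual_ge0.
have bU : b <= G * (Ucard i S t)%:R.
  rewrite /Ucard natr_sum mulr_sumr /b big_nat_cond [leRHS]big_nat_cond.
  apply: ler_sum => q /andP[/andP[q1 qt] _]; rewrite mulr1; apply: HG.
  by rewrite q1 /=; apply: leq_trans (ltnW qt) _.
have U0 : 0 <= (Ucard i S t)%:R :> R by [].
have h1 : a * b <= G * b by apply: ler_wpM2r.
have h2 : G * b <= G ^+ 2 * (Ucard i S t)%:R by rewrite expr2 -mulrA; apply: ler_wpM2l.
have h3 : a ^+ 2 <= G ^+ 2 by rewrite ler_sqr ?nnegrE.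
nra.
Qed.

Theorem corollary1 (R : realType) (n : nat) (N : 'rV[R]_n -> R)
  (X : set 'rV[R]_n) (h : 'rV[R]_n -> \bar R) (p : 'rV[R]_n) :
  is_norm N -> closed X -> convex_set_V X -> regularizer N X h -> X p ->
  (* (i) bounded gradients, eta = Theta(1/sqrt(lambda T)) *)
  (forall G c1 c2 : R, 0 < c1 ->
   exists C : R, forall (I : Type) (T : nat) (i : nat -> I)
     (S : I -> nat -> pred nat) (f : nat -> 'rV[R]_n -> \bar R)
     (g x : nat -> 'rV[R]_n) (eta : R),
     delayed_DDA X h eta T i S f g x ->
     (forall t, (1 <= t <= T)%N -> dual_norm N (g t) <= G) ->
     (0 < lam_delay i S T)%N ->
     c1 / Num.sqrt ((lam_delay i S T)%:R * T%:R) <= eta <=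
       c2 / Num.sqrt ((lam_delay i S T)%:R * T%:R) ->
     (regret f x p T <= (C * Num.sqrt ((lam_delay i S T)%:R * T%:R))%:E)%E)
  /\
  (* (ii) bounded gradients, eta = Theta(1/sqrt(Lambda)), in the regime T = O(Lambda) *)
  (forall G c1 c2 kappa : R, 0 < c1 ->
   exists C : R, forall (I : Type) (T : nat) (i : nat -> I)
     (S : I -> nat -> pred nat) (f : nat -> 'rV[R]_n -> \bar R)
     (g x : nat -> 'rV[R]_n) (eta : R),
     delayed_DDA X h eta T i S f g x ->
     (forall t, (1 <= t <= T)%N -> dual_norm N (g t) <= G) ->
     (0 < Lam_delay i S T)%N ->
     T%:R <= kappa * (Lam_delay i S T)%:R ->
     c1 / Num.sqrt (Lam_delay i S T)%:R <= eta <=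
       c2 / Num.sqrt (Lam_delay i S T)%:R ->
     (regret f x p T <= (C * Num.sqrt (Lam_delay i S T)%:R)%:E)%E)
  /\
  (* (iii) eta = Theta(1/sqrt(L_T)) *)
  (forall c1 c2 : R, 0 < c1 ->
   exists C : R, forall (I : Type) (T : nat) (i : nat -> I)
     (S : I -> nat -> pred nat) (f : nat -> 'rV[R]_n -> \bar R)
     (g x : nat -> 'rV[R]_n) (eta : R),
     delayed_DDA X h eta T i S f g x ->
     0 < L_T N i S g T ->
     c1 / Num.sqrt (L_T N i S g T) <= eta <= c2 / Num.sqrt (L_T N i S g T) ->
     (regret f x p T <= (C * Num.sqrt (L_T N i S g T))%:E)%E).
Proof.
move=> HN _ HX [_ Hsc Hedom _ Hh0] Xp.
have Hfin y : X y -> h y \is a fin_num.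
  by move=> Xy; rewrite ge0_fin_numE //; exact: Hedom.
split; [|split].
- move=> G c1 c2 c10; exists (@hr R n h p / c1 + 2 * c2 * (3 * G ^+ 2)).
  move=> I T i S f g x eta Hd HG lam0 /andP[e1 e2].
  have T1 : (0 < T)%N.
    rewrite lt0n; apply/eqP => T0; move: lam0; rewrite /lam_delay T0 big_geq //.
  set lam := lam_delay i S T in lam0 e1 e2 *.
  set Q := (lam%:R * T%:R : R) in e1 e2 *.
  have Q0 : 0 < Q by rewrite /Q mulr_gt0 // ltr0n.
  have eta0 : 0 < eta.
    apply: lt_le_trans e1; apply: divr_gt0 => //; by rewrite sqrtr_gt0.
  have G0 : 0 <= G by apply: le_trans (dual_ge0 HN (g 1%N)) (HG 1%N _); rewrite T1.
  apply: (@final_bound R n N X h eta HN HX Hsc Hfin Hh0 eta0 I T i S f g x p (3 * G ^+ 2) Q c1 c2 Hd Xp Q0) => //; last by rewrite e1 e2.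
    by apply: mulr_ge0 => //; apply: sqr_ge0.
  apply: le_trans (@L_le R n N HN I i S g T G G0 HG) _.
  apply: (@le_trans _ _ (\sum_(1 <= t < T.+1) (G ^+ 2 + 2 * G ^+ 2 * lam%:R))).
    apply: ler_sum_nat => t /andP[t1 tT]; rewrite lerD2l; apply: ler_wpM2l.
      by apply: mulr_ge0 => //; apply: sqr_ge0.
    rewrite ler_nat /lam /lam_delay; apply: (@leq_bigmax_seq _ _ _ (Ucard i S) t) => //.
    by rewrite mem_index_iota t1.
  rewrite sumr_const_nat subn1 /= -[_ *+ T]mulr_natr /Q.
  have l1 : 1 <= lam%:R :> R by rewrite ler1n.
  have T0 : 0 <= T%:R :> R by [].
  have G2 : 0 <= G ^+ 2 by apply: sqr_ge0.
  have : 0 <= G ^+ 2 * ((lam%:R - 1) * T%:R) by apply: mulr_ge0 => //; apply: mulr_ge0 => //; lra.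
  nra.
- move=> G c1 c2 kappa c10; exists (@hr R n h p / c1 + 2 * c2 * (G ^+ 2 * (`|kappa| + 2))).
  move=> I T i S f g x eta Hd HG Lam0 TK /andP[e1 e2].
  have T1 : (0 < T)%N.
    rewrite lt0n; apply/eqP => T0; move: Lam0; rewrite /Lam_delay T0 big_geq //.
  set Q := ((Lam_delay i S T)%:R : R) in TK e1 e2 *.
  have Q0 : 0 < Q by rewrite /Q ltr0n.
  have eta0 : 0 < eta.
    apply: lt_le_trans e1; apply: divr_gt0 => //; by rewrite sqrtr_gt0.
  have G0 : 0 <= G by apply: le_trans (dual_ge0 HN (g 1%N)) (HG 1%N _); rewrite T1.
  have G2 : 0 <= G ^+ 2 by apply: sqr_ge0.
  apply: (@final_bound R n N X h eta HN HX Hsc Hfin Hh0 eta0 I T i S f g x p (G ^+ 2 * (`|kappa| + 2)) Q c1 c2 Hd Xp Q0) => //; last by rewrite e1 e2.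
    by apply: mulr_ge0 => //; apply: addr_ge0.
  apply: le_trans (@L_le R n N HN I i S g T G G0 HG) _.
  rewrite big_split /= sumr_const_nat subn1 /= -[_ *+ T]mulr_natr -mulr_sumr -natr_sum -/(Lam_delay i S T) -/Q.
  have TQ : T%:R <= `|kappa| * Q.
    apply: le_trans TK _; apply: ler_wpM2r; [exact: ltW | exact: ler_norm].
  have := ler_wpM2l G2 TQ.
  lra.
- move=> c1 c2 c10; exists (@hr R n h p / c1 + 2 * c2 * 1).
  move=> I T i S f g x eta Hd L0 /andP[e1 e2].
  have eta0 : 0 < eta.
    apply: lt_le_trans e1; apply: divr_gt0 => //; by rewrite sqrtr_gt0.
  apply: (@final_bound R n N X h eta HN HX Hsc Hfin Hh0 eta0 I T i S f g x p 1 (L_T N i S g T) c1 c2 Hd Xp L0) => //; first by rewrite mul1r.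
  by rewrite e1 e2.
Qed.
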